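(* Under Assumptions A1–A4, with $(\beta_t)$ positive and $\beta_t\to\infty$, the BOKE+ iterates $\bm{X}_t$ satisfy: (i) for a fixed bandwidth $\ell_t\equiv\ell$, $\inf_t h_{\mathcal{X},\bm{X}_t}\le R_\Psi\ell$ almost surely; (ii) there exists a bandwidth sequence $\ell_t\to0$ such that $\inf_t h_{\mathcal{X},\bm{X}_t}=0$ almost surely.
   Context: Standing setup. A1: $\mathcal{X}\subset\mathbb{R}^d$ compact, convex, nonempty interior. A2: $f$ continuous on $\mathcal{X}$. A3: kernel $k(\bm{x},\bm{x}')=\Psi((\bm{x}-\bm{x}')/\ell)$, $\Psi\ge0$ with support in $B(\bm{0},R_\Psi)$, continuous at $\bm{0}$, $\Psi(\bm{0})>0$, $\sup\Psi\le M_\Psi$. A4: independent zero-mean sub-Gaussian noises with parameter $\varsigma$. $W_t(\bm{x})=\sum_ik(\bm{x},\bm{x}_i)$; $m_t$ is kernel regression $\sum_ik(\bm{x},\bm{x}_i)y_i/W_t(\bm{x})$, extended by the nearest-neighbor average where $W_t=0$; $\hat\sigma_t=W_t^{-1/2}$ (with $c/0=\infty$). BOKE+ with parameter $p\in(0,1]$: at each iteration $t\ge T_0$ draw independently $q\sim\mathrm{Bernoulli}(p)$; if $q=1$ set $\bm{x}_{t+1}\in\arg\max_{\mathcal{X}}(m_t+\beta_t\hat\sigma_t)$, otherwise $\bm{x}_{t+1}\in\arg\max_{\mathcal{X}}m_t$; observe $y_{t+1}=f(\bm{x}_{t+1})+\varepsilon_{t+1}$. Fill distance $h_{\mathcal{X},\bm{X}_t}=\sup_{\bm{x}\in\mathcal{X}}\min_{i\le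 t}\|\bm{x}-\bm{x}_i\|$. *)

(* Defs.v *)
From HB Require Import structures.
From mathcomp Require Import all_boot all_order all_algebra.
From mathcomp Require Import all_classical all_reals all_analysis.
Set Implicit Arguments. Unset Strict Implicit. Unset Printing Implicit Defensive.
Import Order.TTheory GRing.Theory Num.Theory.
Import numFieldNormedType.Exports.
Local Open Scope classical_set_scope.
Local Open Scope ring_scope.

Section BOKE.
Variables (R : realType) (d : nat).
Notation V := 'rV[R]_d.

(* Euclidean norm on R^d (the library norm on 'rV is the max norm). *)
Definition enorm (v : V) : R := Num.sqrt (\sum_(i < d) v ord0 i ^+ 2).

Definition convex_set (X : set V) : Prop :=
  forall x y (lam : R), X x -> X y -> 0 <= lam <= 1 ->
    X (lam *: x + (1 - lam) *: y).

Definition A1 (X : set V) : Prop :=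
  compact X /\ convex_set X /\ interior X !=set0.

Definition A3 (Psi : V -> R) (RPsi MPsi : R) : Prop :=
  0 < RPsi /\
  (forall z, 0 <= Psi z) /\
  (forall z, RPsi < enorm z -> Psi z = 0) /\
  (Psi x @[x --> (0 : V)] --> Psi 0) /\
  0 < Psi 0 /\
  (forall z, Psi z <= MPsi).

Definition kern (Psi : V -> R) (ell : R) (x x' : V) : R := Psi (ell^-1 *: (x - x')).

Definition Wt (Psi : V -> R) (ell : R) (t : nat) (xs : nat -> V) (x : V) : R :=
  \sum_(i < t) kern Psi ell x (xs i).

Definition dmin (t : nat) (xs : nat -> V) (x : V) : R :=
  \big[Order.min/enorm (x - xs 0%N)]_(i < t) enorm (x - xs i).

Definition nn_avg (t : nat) (xs : nat -> V) (ys : nat -> R) (x : V) : R :=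
  (\sum_(i < t | enorm (x - xs i) == dmin t xs x) ys i) /
  (#|[pred i : 'I_t | enorm (x - xs i) == dmin t xs x]|)%:R.

Definition mt (Psi : V -> R) (ell : R) (t : nat) (xs : nat -> V) (ys : nat -> R)
  (x : V) : R :=
  if Wt Psi ell t xs x == 0 then nn_avg t xs ys x
  else (\sum_(i < t) kern Psi ell x (xs i) * ys i) / Wt Psi ell t xs x.

Definition ucb (Psi : V -> R) (ell beta : R) (t : nat) (xs : nat -> V)
  (ys : nat -> R) (x : V) : \bar R :=
  if Wt Psi ell t xs x == 0 then +oo%E
  else (mt Psi ell t xs ys x + beta / Num.sqrt (Wt Psi ell t xs x))%:E.

Definition is_argmax (X : set V) (g : V -> \bar R) (x : V) : Prop :=
  X x /\ forall z, X z -> (g z <= g x)%E.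

(* fill distance h_{X, X_t} = sup_{x in X} min_{i < t} ||x - x_i|| (= +oo if t = 0) *)
Definition fill_dist (X : set V) (xs : nat -> V) (t : nat) : \bar R :=
  ereal_sup [set \big[Order.min/+oo%E]_(i < t) (enorm (x - xs i))%:E | x in X].

Section Prob.
Context {d0 : measure_display} {T : measurableType d0} (P : probability T R).

Definition mutually_independent (I : eqType) (Z : I -> T -> R) : Prop :=
  (forall j, measurable_fun setT (Z j)) /\
  forall (J : seq I) (B : I -> set R), uniq J -> (forall j, measurable (B j)) ->
    P (\bigcap_(j in [set` J]) (Z j @^-1` B j)) =
    (\prod_(j <- J) P (Z j @^-1` B j))%E.

Definition bernoulli_seq (p : R) (q : nat -> T -> R) : Prop :=
  forall t, measurable_fun setT (q t) /\ (forall w, q t w = 0 \/ q t w = 1) /\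
    P [set w | q t w = 1] = p%:E.

Definition subgaussian_noise (vs : R) (eps : nat -> T -> R) : Prop :=
  forall t, measurable_fun setT (eps t) /\
    P.-integrable setT (EFin \o eps t) /\
    (\int[P]_w (eps t w)%:E = 0)%E /\
    forall lam : R, (\int[P]_w (expR (lam * eps t w))%:E <=
                     (expR (lam ^+ 2 * vs ^+ 2 / 2))%:E)%E.

Definition indep_q_eps (q eps : nat -> T -> R) : Prop :=
  mutually_independent
    (fun j : nat + nat => match j with inl t => q t | inr i => eps i end).

(* The BOKE+ iterates: xs i (i < T0) is the initial design x_1..x_T0,
   and for t >= T0, xs t = x_{t+1} is chosen from the data xs 0..t-1. *)
Definition boke_plus_run (X : set V) (f : V -> R) (Psi : V -> R)
  (ell beta : nat -> R) (T0 : nat) (q eps : nat -> T -> R)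
  (xs : nat -> T -> V) : Prop :=
  (forall w i, (i < T0)%N -> X (xs i w)) /\
  (forall w t, (T0 <= t)%N ->
     let ys := fun i => f (xs i w) + eps i w in
     if q t w == 1
     then is_argmax X (ucb Psi (ell t) (beta t) t (fun i => xs i w) ys) (xs t w)
     else is_argmax X (fun x => (mt Psi (ell t) t (fun i => xs i w) ys x)%:E)
                      (xs t w)).

End Prob.
End BOKE.

(* Main.v *)
Require Import Defs.
From HB Require Import structures.
From mathcomp Require Import all_boot all_order all_algebra.
From mathcomp Require Import all_classical all_reals all_analysis.
From mathcomp Require Import ring lra zify.
Import Order.TTheory GRing.Theory Num.Theory.
Import numFieldNormedType.Exports.
Local Open Scope classical_set_scope.
Local Open Scope ring_scope.

Module Helpers.
Set Implicit Arguments. Unset Strict Implicit. Unset Printing Implicit Defensive.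

Section EN.
Variables (R : realType) (d : nat).
Notation V := 'rV[R]_d.

Lemma sumsq_ge0 (v : V) : 0 <= \sum_(i < d) v ord0 i ^+ 2.
Proof. by apply: sumr_ge0 => i _; rewrite sqr_ge0. Qed.

Lemma enorm_ge0 (v : V) : 0 <= enorm v.
Proof. exact: sqrtr_ge0. Qed.

Lemma enorm_sq (v : V) : enorm v ^+ 2 = \sum_(i < d) v ord0 i ^+ 2.
Proof. by rewrite /enorm sqr_sqrtr // sumsq_ge0. Qed.

Lemma enormZ (c : R) (v : V) : enorm (c *: v) = `|c| * enorm v.
Proof.
rewrite /enorm (eq_bigr (fun i => c ^+ 2 * v ord0 i ^+ 2)); last first.
  by move=> i _; rewrite mxE exprMn.
by rewrite -mulr_sumr sqrtrM ?sqr_ge0 // sqrtr_sqr.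
Qed.

Lemma enormB (x y : V) : enorm (x - y) = enorm (y - x).
Proof.
by rewrite -opprB -scaleN1r enormZ normrN normr1 mul1r.
Qed.

Lemma coord_le_norm (v : V) i : `|v ord0 i| <= `|v|.
Proof.
have /mapP[j Hj ->] : `|v ord0 i| \in [seq `|v x.1 x.2| | x : 'I_1 * 'I_d].
  by apply/mapP; exists (ord0, i) => //=; rewrite mem_enum.
by rewrite [leRHS]/Num.Def.normr /= mx_normrE; apply/bigmax_geP; right => /=; exists j.
Qed.

Lemma norm_le_enorm (v : V) : `|v| <= enorm v.
Proof.
rewrite [leLHS]/Num.Def.normr /= mx_normrE; apply: bigmax_le; first exact: enorm_ge0.
move=> [i j] _ /=; rewrite (ord1 i).
rewrite -sqrtr_sqr /enorm ler_sqrt ?sumsq_ge0 //.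
by rewrite (bigD1 j) //= lerDl sumr_ge0 // => k _; rewrite sqr_ge0.
Qed.

Lemma enorm_sq_le (v : V) : enorm v ^+ 2 <= d%:R * `|v| ^+ 2.
Proof.
have -> : d%:R * `|v| ^+ 2 = \sum_(i < d) `|v| ^+ 2.
  by rewrite sumr_const card_ord mulr_natl.
rewrite enorm_sq; apply: ler_sum => i _.
rewrite -real_normK ?num_real //; apply: lerXn2r; rewrite ?nnegrE //.
exact: coord_le_norm.
Qed.

End EN.


Section PK.
Variables (R : realType) (d : nat).
Notation V := 'rV[R]_d.

Lemma close_in_ball (δ : R) (c x y : V) : 0 < δ ->
  ball c (δ / (2 * (d.+1)%:R)) x -> ball c (δ / (2 * (d.+1)%:R)) y ->
  enorm (x - y) < δ.
Proof.
move=> δ0; rewrite -!ball_normE /ball_ /= => hx hy.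
set D := (d.+1)%:R : R.
have D1 : 1 <= D by rewrite /D ler1n.
set a := `|x - y|.
have a0 : 0 <= a by exact: normr_ge0.
have ha : a < δ / (2 * D) + δ / (2 * D).
  rewrite /a; apply: le_lt_trans _ (ltrD hx hy).
  rewrite (_ : x - y = (x - c) + (c - y)); last by rewrite addrA subrK.
  by apply: le_trans (ler_normD _ _) _; rewrite (distrC x c).
have hDa : D * a < δ.
  have -> : δ = D * (δ / (2 * D) + δ / (2 * D)).
    by field; rewrite addrC natr1 pnatr_eq0.
  by rewrite ltr_pM2l // (lt_le_trans ltr01 D1).
have hsq : enorm (x - y) ^+ 2 < δ ^+ 2.
  apply: (le_lt_trans (enorm_sq_le _)).
  have hd : d%:R * a ^+ 2 <= (D * a) ^+ 2.
    rewrite /D -natr1 in hDa D1 *. nra.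
  apply: (le_lt_trans hd); rewrite ltr_pXn2r // ?nnegrE; first by apply: mulr_ge0 => //; apply: le_trans D1.
  exact: ltW.
by rewrite -(ltr_pXn2r (_ : (0 < 2)%N)) ?nnegrE ?enorm_ge0 // ltW.
Qed.

Lemma pack_seq (δ : R) (cs s : seq V) : 0 < δ ->
  (forall x, x \in s -> exists2 c, c \in cs & ball c (δ / (2 * (d.+1)%:R)) x) ->
  pairwise (fun x y => δ <= enorm (x - y)) s -> (size s <= size cs)%N.
Proof.
move=> δ0; elim: s cs => [//|x s IH] cs Hc /= /andP[Hx Hs].
have [c cin bx] := Hc x (mem_head _ _).
have := IH (rem c cs); rewrite size_rem // => H.
have: (size s <= (size cs).-1)%N.
  apply: H => // y yin.
  have yin' : y \in x :: s by rewrite in_cons yin orbT.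
  have [c' c'in by'] := Hc y yin'.
  exists c' => //.
  have : c' != c.
    apply/eqP => E; subst c'.
    have := close_in_ball δ0 bx by'.
    by move/allP: Hx => /(_ y yin); rewrite leNgt => /negP.
  move: c'in; rewrite (perm_mem (perm_to_rem cin)) inE => /orP[/eqP->|//].
  by rewrite eqxx.
by case: (cs) cin.
Qed.

Lemma packing (X : set V) : compact X -> forall δ : R, 0 < δ ->
  exists N : nat, forall s : seq V, (forall x, x \in s -> X x) ->
    pairwise (fun x y => δ <= enorm (x - y)) s -> (size s <= N)%N.
Proof.
rewrite compact_cover => cX δ δ0.
set ρ := δ / (2 * (d.+1)%:R).
have ρ0 : 0 < ρ by rewrite /ρ divr_gt0 // mulr_gt0 // ltr0n.
have := cX V X (fun c => ball c ρ) (fun c _ => ball_open c ρ).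
case.
  move=> x Xx; exists x => //; exact: ballxx.
move=> D' sub cov.
exists (size (finmap.enum_fset D')) => s sX ps.
apply: pack_seq δ0 _ ps => x xs.
have [c /= cD bx] := cov x (sX x xs).
by exists c.
Qed.

End PK.


Section PC.
Variables (R : realType) (d : nat).
Notation V := 'rV[R]_d.

Lemma psi_pos (Psi : V -> R) RPsi MPsi : A3 Psi RPsi MPsi ->
  exists2 r0 : R, 0 < r0 & forall z, enorm z < r0 -> 0 < Psi z.
Proof.
move=> [_ [_ [_ [Hc [P0 _]]]]].
have h2 : 0 < Psi 0 / 2 by rewrite divr_gt0.
have [e e0 He] := (nbhs_ballP _ _).1 (cvgr_dist_lt _ _ Hc _ h2).
exists e => // z hz.
have : ball (0 : V) e z.
  rewrite -ball_normE /ball_ /= sub0r normrN.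
  exact: le_lt_trans (norm_le_enorm z) hz.
move/He => /=; rewrite ltr_norml => /andP[h1 h3]; lra.
Qed.

End PC.


Section PD.
Variables (R : realType) (d : nat).
Notation V := 'rV[R]_d.

Lemma fill_le (X : set V) (xs : nat -> V) t (c : R) :
  (forall x, X x -> exists i : 'I_t, enorm (x - xs i) <= c) ->
  (fill_dist X xs t <= c%:E)%E.
Proof.
move=> H; apply: ge_ereal_sup => y [x Xx <-].
have [i hi] := H x Xx.
by apply: le_trans (bigmin_le _ i _) _; rewrite lee_fin.
Qed.

Lemma fill_ge0 (X : set V) (xs : nat -> V) t :
  X !=set0 -> (0 <= fill_dist X xs t)%E.
Proof.
move=> [x0 Xx0]; rewrite /fill_dist.
apply: (@le_trans _ _ (\big[Order.min/+oo%E]_(i < t) (enorm (x0 - xs i))%:E)).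
  by apply: le_bigmin => // i _; rewrite lee_fin enorm_ge0.
by apply: ereal_sup_ubound; exists x0.
Qed.

Lemma ucb_sep (X : set V) (Psi : V -> R) RPsi MPsi (r0 e beta : R) t
    (xs : nat -> V) (ys : nat -> R) (xt : V) :
  A3 Psi RPsi MPsi -> (forall z, enorm z < r0 -> 0 < Psi z) -> 0 < e ->
  is_argmax X (ucb Psi e beta t xs ys) xt ->
  ((RPsi * e)%:E < fill_dist X xs t)%E ->
  forall i : 'I_t, r0 * e <= enorm (xt - xs i).
Proof.
move=> [_ [Pge0 [Psupp _]]] hr0 e0 [Xxt Hmax] Hf.
have [x [Xx Hx]] : exists x, X x /\ forall i : 'I_t, RPsi * e < enorm (x - xs i).
  apply: contrapT => Hn; move: Hf; apply/negP; rewrite -leNgt.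
  apply: fill_le => x Xx; apply: contrapT => Hn2; apply: Hn; exists x; split => // i.
  rewrite ltNge; apply/negP => hle; apply: Hn2; by exists i.
have W0 : Wt Psi e t xs x = 0.
  rewrite /Wt big1 // => i _; rewrite /kern; apply: Psupp.
  rewrite enormZ ger0_norm ?invr_ge0 ?ltW // ltr_pdivlMl //.
  by rewrite mulrC.
have Hu : ucb Psi e beta t xs ys x = +oo%E by rewrite /ucb W0 eqxx.
have := Hmax x Xx; rewrite Hu leye_eq => /eqP.
rewrite /ucb; case: ifPn => [/eqP Wxt0 _|//].
move=> i.
have hk : kern Psi e xt (xs i) = 0.
  by move: Wxt0; rewrite /Wt => /psumr_eq0P; apply => // j _; apply: Pge0.
rewrite /kern in hk.
have h : r0 <= e^-1 * enorm (xt - xs i).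
  rewrite leNgt; apply/negP => h.
  have := hr0 (e^-1 *: (xt - xs i)).
  rewrite hk ltxx enormZ ger0_norm ?invr_ge0 ?ltW //; by move=> /(_ h).
have := ler_wpM2r (ltW e0) h.
by rewrite mulrAC mulVf ?mul1r // gt_eqF.
Qed.

End PD.


Section PE.
Variables (R : realType) (d : nat).
Notation V := 'rV[R]_d.

Lemma block_det (X : set V) (f : V -> R) (Psi : V -> R) RPsi MPsi (r0 : R)
  (ell beta : nat -> R) (T0 : nat) (d0 : measure_display) (T : measurableType d0)
  (q eps : nat -> T -> R) (xs : nat -> T -> V) (w : T) (e : R) (N : nat)
  (tk : nat -> nat) :
  A3 Psi RPsi MPsi -> (forall z, enorm z < r0 -> 0 < Psi z) -> 0 < e ->
  boke_plus_run X f Psi ell beta T0 q eps xs ->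
  (forall s : seq V, (forall x, x \in s -> X x) ->
     pairwise (fun x y => r0 * e <= enorm (x - y)) s -> (size s <= N)%N) ->
  (forall k, (k <= N)%N -> (T0 <= tk k)%N /\ q (tk k) w = 1 /\ ell (tk k) = e) ->
  (forall i j, (i < j <= N)%N -> (tk i < tk j)%N) ->
  exists k, (k <= N)%N /\
    (fill_dist X (fun i => xs i w) (tk k) <= (RPsi * e)%:E)%E.
Proof.
move=> hA3 hr0 e0 [_ Hrun] Hpack Htk Hmono.
apply: contrapT => Hn.
have Hk : forall k, (k <= N)%N ->
    X (xs (tk k) w) /\
    forall i : 'I_(tk k), r0 * e <= enorm (xs (tk k) w - xs i w).
  move=> k kN; have [T0k [qk ek]] := Htk k kN.
  have := Hrun w (tk k) T0k; rewrite /= qk eqxx ek => Harg.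
  split; first by case: Harg.
  apply: (ucb_sep hA3 hr0 e0 Harg).
  rewrite ltNge; apply/negP => hle; apply: Hn; exists k; split => //.
set s := [seq xs (tk k) w | k <- iota 0 N.+1].
have Hs := Hpack s.
rewrite size_map size_iota ltnn in Hs.
suff : false by []. apply: Hs.
  move=> x /mapP [k kin ->]; apply: (Hk k _).1.
  by move: kin; rewrite mem_iota add0n ltnS.
apply/(pairwiseP 0) => i j; rewrite !inE size_map size_iota !ltnS => iN jN ij.
rewrite !(nth_map 0%N) ?size_iota ?ltnS // !nth_iota ?ltnS // !add0n.
rewrite enormB.
have tij : (tk i < tk j)%N by apply: Hmono; rewrite ij jN.
exact: ((Hk j jN).2 (Ordinal tij)).
Qed.

End PE.


Section PF.
Variables (R : realType) (d0 : measure_display) (T : measurableType d0).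
Variable (P : probability T R) (p : R) (q eps : nat -> T -> R).
Hypothesis (Hq : bernoulli_seq P p q) (Hind : indep_q_eps P q eps).

Definition Ev t := [set w | q t w = 1].

Definition Z a L := \bigcap_(t in [set t | (a <= t < a + L)%N]) ~` Ev t.

Lemma Ev_meas t : measurable (Ev t).
Proof.
have [mq _] := Hq t.
by have := mq measurableT [set 1] (measurable_set1 1); rewrite setTI.
Qed.

Lemma Z_meas a L : measurable (Z a L).
Proof.
have -> : Z a L = \bigcap_(t in setT)
   (if (a <= t < a + L)%N then ~` Ev t else setT).
  apply/seteqP; split => w /= H t.
    by move=> _; case: ifPn => // ht; apply: H.
  by move=> ht; have := H t I; rewrite ht.
apply: bigcap_measurable; first by exists 0%N.
by move=> t _; case: ifP => _ //; apply: measurableC; apply: Ev_meas.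
Qed.

Lemma preim0 t : q t @^-1` [set 0] = ~` Ev t.
Proof.
have [_ [h01 _]] := Hq t.
apply/seteqP; split => w /=.
  by rewrite /Ev /= => h; rewrite h => /esym/eqP; rewrite oner_eq0.
by rewrite /Ev /=; case: (h01 w) => -> // [].
Qed.

Lemma prod_const (c : R) a L :
  (\prod_(t <- iota a L) c%:E)%E = (c ^+ L)%:E.
Proof.
elim: L a => [|L IH] a; first by rewrite big_nil.
by rewrite /= big_cons IH -EFinM exprS.
Qed.

Lemma Z_le a L : (P (Z a L) <= ((1 - p) ^+ L)%:E)%E.
Proof.
have [mZ Hprod] := Hind.
pose Zf := fun j : nat + nat => match j with inl t => q t | inr i => eps i end.
pose J := map inl (iota a L) : seq (nat + nat).
have uJ : uniq J by rewrite map_inj_uniq ?iota_uniq // => x y [].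
have := Hprod J (fun _ => [set 0]) uJ (fun _ => measurable_set1 0).
have -> : \bigcap_(j in [set` J]) (Zf j @^-1` [set 0]) = Z a L.
  apply/seteqP; split => w /= H.
    move=> t ht; rewrite -preim0 /=.
    apply: (H (inl t)) => /=; rewrite /J mem_map ?mem_iota //.
    by move=> x y [].
  move=> j /= /mapP [t tin ->] /=.
  have : (~` Ev t) w by apply: H; move: tin; rewrite mem_iota.
  by rewrite -preim0.
move=> ->; rewrite /J big_map.
rewrite (eq_bigr (fun _ => (1 - p)%:E)); last first.
  move=> t _; rewrite preim0 probability_setC; last exact: Ev_meas.
  by have [_ [_ ->]] := Hq t.
by rewrite prod_const.
Qed.

Fixpoint Fr a L N := match N with
  | 0 => Z a L
  | N'.+1 => Fr a L N' `|` Z (a + N'.+1 * L) L end.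

Lemma Fr_meas a L N : measurable (Fr a L N).
Proof. by elim: N => [|N IH] /=; [exact: Z_meas|apply: measurableU => //; exact: Z_meas]. Qed.

Lemma Fr_le a L N : (P (Fr a L N) <= ((N.+1)%:R * (1 - p) ^+ L)%:E)%E.
Proof.
elim: N => [|N IH] /=; first by rewrite mul1r Z_le.
apply: le_trans (measureU2 _ (Fr_meas _ _ _) (Z_meas _ _)) _.
have -> : (N.+2)%:R * (1 - p) ^+ L = N.+1%:R * (1 - p) ^+ L + (1 - p) ^+ L.
  by rewrite -[in LHS]natr1 mulrDl mul1r.
by rewrite EFinD; apply: leeD => //; exact: Z_le.
Qed.

Lemma Fr_mem a L N w : ~ Fr a L N w -> forall k, (k <= N)%N ->
  exists t, (a + k * L <= t < a + k * L + L)%N /\ q t w = 1.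
Proof.
elim: N => [|N IH] /= hF k kN.
  move: kN; rewrite leqn0 => /eqP ->; rewrite mul0n addn0.
  apply: contrapT => Hn; apply: hF => t ht /= ht1; apply: Hn; by exists t.
have [kN'|] := leqP k N; first by apply: IH => // H; apply: hF; left.
move=> Nk; have -> : k = N.+1 by apply/eqP; rewrite eqn_leq kN Nk.
apply: contrapT => Hn; apply: hF; right => t ht /= ht1; apply: Hn; by exists t.
Qed.

End PF.


Lemma geo_small (R : realType) (x c eps : R) : 0 <= x < 1 -> 0 <= c -> 0 < eps ->
  exists m, forall n, (m <= n)%N -> c * x ^+ n <= eps.
Proof.
move=> /andP[x0 x1] c0 e0.
have hx : `|x| < 1 by rewrite ger0_norm.
have ec : 0 < eps / (c + 1) by rewrite divr_gt0 // ltr_wpDl.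
have [m _ Hm] := cvgr_dist_lt _ _ (cvg_expr hx) _ ec.
exists m => n mn; have := Hm n mn; rewrite /= sub0r normrN ger0_norm ?exprn_ge0 // => h.
have c1 : 0 < c + 1 by rewrite ltr_wpDl.
have : (c + 1) * x ^+ n <= eps.
  by rewrite mulrC -ler_pdivlMr // ltW.
apply: le_trans; rewrite ler_wpM2r ?exprn_ge0 // lerDl //.
Qed.

Section PG.
Variables (R : realType) (d : nat).
Notation V := 'rV[R]_d.

Lemma block_fill (X : set V) (f : V -> R) (Psi : V -> R) RPsi MPsi (r0 : R)
  (ell beta : nat -> R) (T0 : nat) (d0 : measure_display) (T : measurableType d0)
  (q eps : nat -> T -> R) (xs : nat -> T -> V) (w : T) (e : R) (a L N : nat) :
  A3 Psi RPsi MPsi -> (forall z, enorm z < r0 -> 0 < Psi z) -> 0 < e ->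
  boke_plus_run X f Psi ell beta T0 q eps xs ->
  (forall s : seq V, (forall x, x \in s -> X x) ->
     pairwise (fun x y => r0 * e <= enorm (x - y)) s -> (size s <= N)%N) ->
  (T0 <= a)%N -> (forall t, (a <= t < a + N.+1 * L)%N -> ell t = e) ->
  ~ Fr q a L N w ->
  exists t, (fill_dist X (fun i => xs i w) t <= (RPsi * e)%:E)%E.
Proof.
move=> hA3 hr0 e0 hrun hpack T0a hell hF.
have Hm := Fr_mem hF.
have [tk Htk] : exists tk : nat -> nat, forall k, (k <= N)%N ->
    (a + k * L <= tk k < a + k * L + L)%N /\ q (tk k) w = 1.
  have : forall k, exists t, (k <= N)%N ->
      (a + k * L <= t < a + k * L + L)%N /\ q t w = 1.
    move=> k; have [kN|Nk] := leqP k N.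
      by have [t ht] := Hm k kN; exists t.
    by exists 0%N.
  by move/choice => [g Hg]; exists g.
have H1 : forall k, (k <= N)%N -> (T0 <= tk k)%N /\ q (tk k) w = 1 /\ ell (tk k) = e.
  move=> k kN; have [/andP[h1 h2] h3] := Htk k kN; split => //; first lia.
  split => //; apply: hell; apply/andP; split; first lia.
  have : (k.+1 * L <= N.+1 * L)%N by rewrite leq_mul2r ltnS kN orbT.
  rewrite mulSn; lia.
have H2 : forall i j, (i < j <= N)%N -> (tk i < tk j)%N.
  move=> i j /andP[ij jN].
  have [/andP[i1 i2] _] := Htk i (ltnW (leq_trans ij jN)).
  have [/andP[j1 j2] _] := Htk j jN.
  have : (i.+1 * L <= j * L)%N by rewrite leq_mul2r ij orbT.
  rewrite mulSn; lia.
have [k [kN hk]] := @block_det R d X f Psi RPsi MPsi r0 ell beta T0 d0 T q eps xs w e N tk hA3 hr0 e0 hrun hpack H1 H2.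
by exists (tk k).
Qed.

End PG.


Lemma meas0_of_small (R : realType) (x : \bar R) :
  (0 <= x)%E -> (forall eps : R, 0 < eps -> (x <= eps%:E)%E) -> x = 0%E.
Proof.
move=> x0 H; apply/eqP; rewrite eq_le x0 andbT.
by apply/lee_addgt0Pr => e e0; rewrite add0e; apply: H.
Qed.

Lemma part1 (R : realType) (d : nat) (X : set 'rV[R]_d)
  (f : 'rV[R]_d -> R) (Psi : 'rV[R]_d -> R) (RPsi MPsi vs : R)
  (beta : nat -> R) (p : R) (T0 : nat) :
  A1 X -> A3 Psi RPsi MPsi -> 0 < p <= 1 ->
  (forall ell : R, 0 < ell ->
    forall (d0 : measure_display) (T : measurableType d0) (P : probability T R)
      (q eps : nat -> T -> R) (xs : nat -> T -> 'rV[R]_d),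
      bernoulli_seq P p q -> subgaussian_noise P vs eps -> indep_q_eps P q eps ->
      boke_plus_run X f Psi (fun=> ell) beta T0 q eps xs ->
      {ae P, forall w, (ereal_inf (range (fill_dist X (fun i => xs i w)))
                        <= (RPsi * ell)%:E)%E}).
Proof.
move=> [cX _] hA3 /andP[p0 p1] ell ell0 d0 T P q eps xs Hq _ Hind Hrun.
have [r0 r00 hr0] := psi_pos hA3.
have [N HN] := packing cX (mulr_gt0 r00 ell0).
rewrite /prop_near1 /almost_everywhere /=.
exists (\bigcap_(m in setT) Fr q T0 m N); split.
- by apply: bigcap_measurable; [exists 0%N|move=> m _; exact: Fr_meas].
- apply: meas0_of_small => // e e0.
  have hx : 0 <= 1 - p < 1 by apply/andP; split; lra.
  have [m Hm] := geo_small hx (ler0n _ N.+1) e0.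
  apply: (@le_trans _ _ (P (Fr q T0 m N))).
    by apply: le_measure; rewrite ?inE; [apply: bigcap_measurable; [exists 0%N|move=> k _; exact: Fr_meas]|exact: Fr_meas|move=> w /(_ m I)].
  apply: (le_trans (Fr_le Hq Hind _ _ _)); rewrite lee_fin; exact: Hm.
- move=> w /= Hw m _; apply: contrapT => hF.
  have [t ht] := @block_fill R d X f Psi RPsi MPsi r0 (fun=> ell) beta T0 d0 T q eps xs w ell T0 m N hA3 hr0 ell0 Hrun HN (leqnn _) (fun _ _ => erefl) hF.
  apply: Hw; apply: le_trans ht.
  by apply: ereal_inf_lbound; exists t.
Qed.


Lemma part2 (R : realType) (d : nat) (X : set 'rV[R]_d)
  (f : 'rV[R]_d -> R) (Psi : 'rV[R]_d -> R) (RPsi MPsi vs : R)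
  (beta : nat -> R) (p : R) (T0 : nat) :
  A1 X -> A3 Psi RPsi MPsi -> 0 < p <= 1 ->
  (exists ell : nat -> R, (forall t, 0 < ell t) /\ ell @ \oo --> 0 /\
    forall (d0 : measure_display) (T : measurableType d0) (P : probability T R)
      (q eps : nat -> T -> R) (xs : nat -> T -> 'rV[R]_d),
      bernoulli_seq P p q -> subgaussian_noise P vs eps -> indep_q_eps P q eps ->
      boke_plus_run X f Psi ell beta T0 q eps xs ->
      {ae P, forall w, ereal_inf (range (fill_dist X (fun i => xs i w))) = 0%E}).
Proof.
move=> [cX [_ [x0 hx0]]] hA3 /andP[p0 p1].
have Xx0 : X x0 by apply: interior_subset.
have RPsi0 : 0 < RPsi by case: hA3.
have [r0 r00 hr0] := psi_pos hA3.
pose e (k : nat) : R := (k.+1%:R)^-1.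
have e0 : forall k, 0 < e k by move=> k; rewrite /e invr_gt0 ltr0n.
have e_anti : forall i j, (i <= j)%N -> e j <= e i.
  move=> i j ij; rewrite /e lef_pV2 ?posrE ?ltr0n // ler_nat ltnS //.
have : forall k, exists N, forall s : seq 'rV[R]_d, (forall x, x \in s -> X x) ->
    pairwise (fun x y => r0 * e k <= enorm (x - y)) s -> (size s <= N)%N.
  by move=> k; apply: packing cX _ (mulr_gt0 r00 (e0 k)).
move/choice => [Nf HN].
have hx : 0 <= 1 - p < 1 by apply/andP; split; lra.
have : forall k, exists L, (0 < L)%N /\ (Nf k).+1%:R * (1 - p) ^+ L <= e k.
  move=> k; have [m Hm] := geo_small hx (ler0n _ (Nf k).+1) (e0 k).
  by exists m.+1; split => //; apply: Hm.
move/choice => [Lf HL].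
pose len k := ((Nf k).+1 * Lf k)%N.
pose s k := (T0 + \sum_(i < k) len i)%N.
have s_succ : forall k, s k.+1 = (s k + len k)%N.
  by move=> k; rewrite /s big_ord_recr /= addnA.
have len_pos : forall k, (0 < len k)%N.
  by move=> k; rewrite /len muln_gt0 /=; case: (HL k).
have s0 : s 0%N = T0 by rewrite /s big_ord0 addn0.
have s_lt : forall i j, (i < j)%N -> (s i < s j)%N.
  apply: (@homo_ltn _ s (fun a b => (a < b)%N)); first by move=> ? ? ?; apply: ltn_trans.
  by move=> k; rewrite s_succ -addn1 leq_add2l len_pos.
have s_le : forall i j, (i <= j)%N -> (s i <= s j)%N.
  by move=> i j; rewrite leq_eqVlt => /orP[/eqP->//|/s_lt/ltnW].
pose kf := fix kf (t : nat) : nat := match t with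
  | 0 => 0%N
  | t'.+1 => if (s (kf t').+1 <= t'.+1)%N then (kf t').+1 else kf t' end.
have kfS : forall t, kf t.+1 = if (s (kf t).+1 <= t.+1)%N then (kf t).+1 else kf t.
  by [].
have Inv : forall t, (s (kf t) <= maxn t T0)%N /\ (t < s (kf t).+1)%N.
  elim => [|t [IH1 IH2]].
    by rewrite /= s0 s_succ s0 max0n; split => //; have := len_pos 0%N; lia.
  rewrite kfS; case: ifP => h.
    have hs := s_lt (kf t).+1 (kf t).+2 (ltnSn _).
    split; lia.
  move/negbT: h; rewrite -ltnNge => h; split; lia.
have kf_block : forall k t, (s k <= t < s k.+1)%N -> kf t = k.
  move=> k t /andP[h1 h2]; have [I1 I2] := Inv t.
  have hT : (T0 <= s k)%N by rewrite -s0 s_le.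
  case: (ltngtP (kf t) k) => // h.
    have := s_le (kf t).+1 k h; lia.
  have := s_le k.+1 (kf t) h; lia.
have kf_mono : forall i j, (i <= j)%N -> (kf i <= kf j)%N.
  apply: (@homo_leq _ kf (fun a b => (a <= b)%N)); [by []|by move=> ? ? ? h1 h2; exact: leq_trans h1 h2|].
  by move=> t; rewrite kfS; case: ifP.
have kf_ge : forall K t, (s K <= t)%N -> (K <= kf t)%N.
  move=> K t h; have <- : kf (s K) = K.
    by apply: kf_block; rewrite leqnn /= s_lt.
  exact: kf_mono.
exists (fun t => e (kf t)); split; first by move=> t; apply: e0.
split.
  apply/cvgrPdist_lt => eps eps0.
  have [K HK] := ltr_add_invr eps0; rewrite add0r in HK.
  exists (s K) => // t /= ht.
  rewrite sub0r normrN ger0_norm ?ltW //.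
  by apply: le_lt_trans HK; apply: e_anti; apply: kf_ge.
move=> d0 T P q eps xs Hq _ Hind Hrun.
pose G K := \bigcap_(k in [set k | (K <= k)%N]) Fr q (s k) (Lf k) (Nf k).
have Gm : forall K, measurable (G K).
  by move=> K; apply: bigcap_measurable; [exists K => /=|move=> k _; exact: Fr_meas].
rewrite /prop_near1 /almost_everywhere /=.
apply: (negligibleS _ (negligible_bigcup (F := G) _)).
  move=> w /= Hw.
  set I := ereal_inf _ in Hw.
  have I0 : (0 <= I)%E.
    by apply: le_ereal_inf_tmp => y [t _ <-]; apply: fill_ge0; exists x0.
  have HK : exists K, forall k, (K <= k)%N -> ((RPsi * e k)%:E < I)%E.
    move: I0 Hw; case: I => [r| |] //.
    - rewrite lee_fin => r0' rn0.
      have r0'' : 0 < r by rewrite lt_neqAle r0' andbT eq_sym; apply/eqP => h; apply: rn0; rewrite h.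
      have [K HK] := ltr_add_invr (divr_gt0 r0'' RPsi0); rewrite add0r in HK.
      exists K => k Kk; rewrite lte_fin.
      apply: (le_lt_trans (_ : _ <= RPsi * e K)); first by rewrite ler_pM2l // e_anti.
      by rewrite mulrC -ltr_pdivlMr.
    - by move=> _ _; exists 0%N => k _; apply: ltry.
  have [K HK'] := HK.
  exists K => // k /= Kk.
  apply: contrapT => hF.
  have hT : (T0 <= s k)%N by rewrite -s0 s_le.
  have hell : forall t, (s k <= t < s k + (Nf k).+1 * Lf k)%N -> e (kf t) = e k.
    by move=> t ht; rewrite (kf_block k t) // s_succ.
  have [t ht] := @block_fill R d X f Psi RPsi MPsi r0 (fun t => e (kf t)) beta T0 d0 T q eps xs w (e k) (s k) (Lf k) (Nf k) hA3 hr0 (e0 k) Hrun (HN k) hT hell hF.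
  have := HK' k Kk; rewrite ltNge => /negP; apply.
  apply: le_trans ht.
  by apply: ereal_inf_lbound; exists t.
move=> K; exists (G K); split => //.
apply: meas0_of_small => // ee ee0.
have [K' HK'] := ltr_add_invr ee0; rewrite add0r in HK'.
set k := maxn K K'.
apply: (@le_trans _ _ (P (Fr q (s k) (Lf k) (Nf k)))).
  apply: le_measure; rewrite ?inE //; first exact: Fr_meas.
  by move=> w /(_ k (leq_maxl _ _)).
apply: (le_trans (Fr_le Hq Hind _ _ _)); rewrite lee_fin.
apply: le_trans (proj2 (HL k)) _.
apply: ltW; apply: le_lt_trans HK'; apply: e_anti; exact: leq_maxr.
Qed.

End Helpers.
Import Helpers.

Theorem mainTheorem5 (R : realType) (d : nat) (X : set 'rV[R]_d)
  (f : 'rV[R]_d -> R) (Psi : 'rV[R]_d -> R) (RPsi MPsi vs : R)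
  (beta : nat -> R) (p : R) (T0 : nat) :
  A1 X -> {within X, continuous f} -> A3 Psi RPsi MPsi -> 0 <= vs ->
  (forall t, 0 < beta t) -> beta @ \oo --> +oo ->
  0 < p <= 1 -> (1 <= T0)%N ->
  (* (i) fixed bandwidth *)
  (forall ell : R, 0 < ell ->
    forall (d0 : measure_display) (T : measurableType d0) (P : probability T R)
      (q eps : nat -> T -> R) (xs : nat -> T -> 'rV[R]_d),
      bernoulli_seq P p q -> subgaussian_noise P vs eps -> indep_q_eps P q eps ->
      boke_plus_run X f Psi (fun=> ell) beta T0 q eps xs ->
      {ae P, forall w, (ereal_inf (range (fill_dist X (fun i => xs i w)))
                        <= (RPsi * ell)%:E)%E})
  /\
  (* (ii) some vanishing bandwidth sequence *)
  (exists ell : nat -> R, (forall t, 0 < ell t) /\ ell @ \oo --> 0 /\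
    forall (d0 : measure_display) (T : measurableType d0) (P : probability T R)
      (q eps : nat -> T -> R) (xs : nat -> T -> 'rV[R]_d),
      bernoulli_seq P p q -> subgaussian_noise P vs eps -> indep_q_eps P q eps ->
      boke_plus_run X f Psi ell beta T0 q eps xs ->
      {ae P, forall w, ereal_inf (range (fill_dist X (fun i => xs i w))) = 0%E}).
Proof.
move=> hA1 _ hA3 _ _ _ hp _; split.
  exact: (@part1 R d X f Psi RPsi MPsi vs beta p T0 hA1 hA3 hp).
exact: (@part2 R d X f Psi RPsi MPsi vs beta p T0 hA1 hA3 hp).
Qed.
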